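(* Let $\mathcal{B}=\langle V,F,E\rangle$ be a self-contained finite bipartite graph and let $\mathcal{S}_F$ be the set of minimal self-contained sets in $\mathcal{B}$. Then the sets in $\mathcal{S}_F$ are pairwise disjoint, and the sets in $\mathcal{S}_V=\{\mathrm{adj}_{\mathcal{B}}(S):S\in\mathcal{S}_F\}$ are pairwise disjoint.
   Context: $\mathcal{B}=\langle V,F,E\rangle$ is bipartite with variable vertices $V$ and constraint vertices $F$; $\mathrm{adj}_{\mathcal{B}}(X)$ is the set of vertices adjacent to some vertex of $X$. A set $F'\subseteq F$ is self-contained if $|F'|=|\mathrm{adj}_{\mathcal{B}}(F')|$ and $|F''|\le|\mathrm{adj}_{\mathcal{B}}(F'')|$ for all $F''\subseteq F'$. $\mathcal{B}$ is self-contained if $|F|=|V|$ and $F$ is self-contained. A non-empty self-contained set is minimal self-contained if none of its non-empty strict subsets is self-contained. *)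

(* Defs.v *)
From mathcomp Require Import all_boot.
Set Implicit Arguments. Unset Strict Implicit. Unset Printing Implicit Defensive.

(* A finite bipartite graph B = <V, F, E>: variable vertices V, constraint
   vertices F (finite types), edges given by E f v (f in F adjacent to v in V). *)

Definition adjF (V F : finType) (E : F -> V -> bool) (F' : {set F}) : {set V} :=
  [set v | [exists f in F', E f v]].

Definition self_contained (V F : finType) (E : F -> V -> bool) (F' : {set F}) : Prop :=
  #|F'| = #|adjF E F'| /\
  (forall F'' : {set F}, F'' \subset F' -> #|F''| <= #|adjF E F''|).

Definition graph_self_contained (V F : finType) (E : F -> V -> bool) : Prop :=
  #|F| = #|V| /\ self_contained E [set: F].

Definition minimal_self_contained (V F : finType) (E : F -> V -> bool) (S : {set F}) : Prop :=
  S != set0 /\ self_contained E S /\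
  (forall S' : {set F}, S' != set0 -> S' \proper S -> ~ self_contained E S').

(* Main.v *)
Require Import Defs.
From mathcomp Require Import all_boot.
From mathcomp Require Import zify.

Section S.
Variables (V F : finType) (E : F -> V -> bool).

Lemma adjU (A B : {set F}) : adjF E (A :|: B) = adjF E A :|: adjF E B.
Proof.
apply/setP=> v; rewrite !inE; apply/existsP/orP.
- by case=> f /andP[]; rewrite inE => /orP[] fA Efv; [left|right];
     apply/existsP; exists f; rewrite fA.
- by case=> /existsP[f /andP[fA Efv]]; exists f; rewrite inE fA ?orbT.
Qed.

Lemma adjI (A B : {set F}) : adjF E (A :&: B) \subset adjF E A :&: adjF E B.
Proof.
apply/subsetP=> v; rewrite !inE => /existsP[f /andP[]]; rewrite inE.
by case/andP=> fA fB Efv; apply/andP; split; apply/existsP; exists f; rewrite ?fA ?fB.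
Qed.

Lemma adj0 : adjF E set0 = set0.
Proof. by apply/setP=> v; rewrite !inE; apply/existsP; case=> f; rewrite inE. Qed.

Lemma key (A B : {set F}) :
  (forall X : {set F}, #|X| <= #|adjF E X|) ->
  #|A| = #|adjF E A| -> #|B| = #|adjF E B| ->
  #|A :&: B| = #|adjF E (A :&: B)| /\ #|adjF E (A :&: B)| = #|adjF E A :&: adjF E B|.
Proof.
move=> H hA hB.
have h1 := cardsUI A B.
have h2 := cardsUI (adjF E A) (adjF E B).
have h3 := H (A :|: B). have h4 := H (A :&: B).
have h5 := subset_leq_card (adjI A B).
rewrite adjU in h3. lia.
Qed.
End S.

Theorem lemma32 (V F : finType) (E : F -> V -> bool) :
  graph_self_contained E ->
  (forall S1 S2 : {set F},
      minimal_self_contained E S1 -> minimal_self_contained E S2 -> S1 != S2 ->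
      [disjoint S1 & S2]) /\
  (forall S1 S2 : {set F},
      minimal_self_contained E S1 -> minimal_self_contained E S2 ->
      adjF E S1 != adjF E S2 ->
      [disjoint adjF E S1 & adjF E S2]).
Proof.
case=> _ [_ Hall].
have H : forall X : {set F}, #|X| <= #|adjF E X|.
  by move=> X; apply: Hall; apply: subsetT.
have sc : forall X : {set F}, #|X| = #|adjF E X| -> self_contained E X.
  by move=> X hX; split=> // Y _; apply: H.
have part1 : forall S1 S2 : {set F},
      minimal_self_contained E S1 -> minimal_self_contained E S2 -> S1 != S2 ->
      [disjoint S1 & S2].
  move=> S1 S2 [n1 [[t1 _] m1]] [n2 [[t2 _] m2]] ne.
  rewrite -setI_eq0; apply/negPn/negP => nI.
  have [tI _] := @key V F E S1 S2 H t1 t2.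
  have s1 : S1 \subset S2.
    case: (boolP (S1 :&: S2 \proper S1)) => p.
      by exfalso; apply: (m1 _ nI p); apply: sc.
    by move: p; rewrite properEneq subsetIl andbT negbK => /eqP <-; apply: subsetIr.
  have s2 : S2 \subset S1.
    case: (boolP (S1 :&: S2 \proper S2)) => p.
      by exfalso; apply: (m2 _ nI p); apply: sc.
    by move: p; rewrite properEneq subsetIr andbT negbK => /eqP <-; apply: subsetIl.
  by move: ne; rewrite eqEsubset s1 s2.
split=> // S1 S2 h1 h2 ne.
have neS : S1 != S2 by apply: contraNneq ne => ->.
have d := part1 _ _ h1 h2 neS.
move: h1 h2 => [_ [[t1 _] _]] [_ [[t2 _] _]].
have [_ e] := @key V F E S1 S2 H t1 t2.
move: d; rewrite -!setI_eq0 => /eqP d.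
rewrite d adj0 cards0 in e.
by rewrite -cards_eq0 -e.
Qed.
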